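(* Suppose $F,\tilde F\in Sh^{s,0}_{\Lambda_L}(X)\cap Mod(X)$ are related by an exact sequence of one of the forms (1) $0\to\tilde F\to F\to\mathcal{L}_X\to0$, or (2) $0\to\mathcal{L}_X\to F\to\tilde F\to0$, with $\mathcal{L}_X\in loc(X)$. Then a local trivialization $f=(f_1,\dots,f_r)$ of $F$ induces a local trivialization $\tilde f=(\tilde f_1,\dots,\tilde f_r)$ of $\tilde F$ (in case (1) by restriction $\tilde f_s=f_s|_{\tilde V}$, in case (2) by passing to the quotient $\tilde V=V/V_0$, where $V_0\subset V$ is the stalk of $\mathcal{L}_X$), and $\epsilon_{(F,f)}=\epsilon_{(\tilde F,\tilde f)}$.
   Context: $X=\mathbb{R}^3$ or $S^3$, $k$ a field, $(L,L')$ an $r$-component framed oriented link, $L=K_1\sqcup\dots\sqcup K_r$; $loc(X)$ denotes locally constant sheaves on $X$. Sheaves in $Sh^{s,0}_{\Lambda_L}(X)\cap Mod(X)$ (sheaves of $k$-vector spaces with micro-support at infinity in the unit conormal of $L$, microlocally simple with Morse cone in degree $0$) are equivalent to data $(V,\rho,W_s,\rho_s,T_s)$: $\rho:\pi_1(X\setminus L)\to GL(V)$ the local system on the complement, $W_s$ the stalk on $K_s$, $T_s:W_s\to V$ the injective restriction map with one-dimensional cokernel, the meridian of $K_s$ acting trivially on its image and the longitude action intertwining with the monodromy of $K_s$; we view $W_s\subset V$. $A_c$ denotes trivialized parallel transport along a path $c$, $M_t=\rho(m_t)$. A local trivialization is an $r$-tuple of surjective linear maps $f_s:V\to k$ with $f_s|_{W_s}=0$.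 $\epsilon_{(F,f)}$ is the augmentation of the framed cord algebra $\mathrm{Cord}(L)$ given on generators by $\epsilon(c_{st})=f_sA_{c_{st}}(\mathrm{id}_V-M_t)f_t^{-1}$ for framed cords $c_{st}$ from the framing curve of $K_s$ to that of $K_t$, $\epsilon(\lambda_s)=f_sA_{\ell_s}f_s^{-1}$ ($\ell_s$ the longitude loop), $\epsilon(\mu_s)=1-f_s(\mathrm{id}_V-M_s)f_s^{-1}$, where $f_s^{-1}$ is any right inverse of $f_s$. *)

(* Defs.v *)
From HB Require Import structures.
From mathcomp Require Import all_boot all_order all_algebra.
Set Implicit Arguments. Unset Strict Implicit. Unset Printing Implicit Defensive.
Import GRing.Theory.
Local Open Scope ring_scope.

(* Algebraic model of sheaves on X = R^3 or S^3 with micro-support in the    *)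
(* unit conormal of an r-component link L (cf. the equivalence recalled in   *)
(* the context).  The fundamental group pi_1(X \ L) is modelled by an        *)
(* arbitrary group [G], together with the meridians [mer s] and longitudes   *)
(* [lon s] of the components K_s.  Vector spaces are k^n, viewed as column   *)
(* vectors; linear maps are matrices acting on the left.                     *)
(* A [ldata] is the data (V, rho, W_s, rho_s, T_s) without the conditions:  *)
(*   dV           = dim V (stalk on the complement, with a trivialization)   *)
(*   rho g        = the action of g in pi_1(X\L) on V                        *)
(*   dW s         = dim W_s (stalk on K_s)                                   *)
(*   rhoK s       = monodromy of the stalk local system along K_s            *)
(*   T s          = restriction map W_s -> V                                 *)

Record ldata (k : fieldType) (r : nat) (G : groupType) := LData {
  dV : nat;
  rho : G -> 'M[k]_dV;
  dW : 'I_r -> nat;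
  rhoK : forall s : 'I_r, 'M[k]_(dW s);
  T : forall s : 'I_r, 'M[k]_(dV, dW s)
}.

Definition is_rep (k : fieldType) (r : nat) (G : groupType) (F : ldata k r G) :=
  [/\ forall g, rho F g \in unitmx,
      rho F 1%g = 1%:M,
      forall g h, rho F (g * h)%g = rho F g *m rho F h
    & forall s, rhoK F s \in unitmx].

(* Objects of Sh^{s,0}_{Lambda_L}(X) \cap Mod(X), in terms of the data:
   T_s injective with one-dimensional cokernel, meridian of K_s acting
   trivially on its image, longitude action intertwining with the monodromy. *)
Definition is_Sh_s0 (k : fieldType) (r : nat) (G : groupType)
    (mer lon : 'I_r -> G) (F : ldata k r G) :=
  [/\ is_rep F,
      forall s, \rank (T F s) = dW F s,
      forall s, (dW F s + 1)%N = dV F,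
      forall s, rho F (mer s) *m T F s = T F s
    & forall s, rho F (lon s) *m T F s = T F s *m rhoK F s].

(* The constant local system k^d on X (X is simply connected, so every
   object of loc(X) is of this form): trivial action, stalk k^d everywhere,
   identity restriction maps. *)
Definition const_loc (k : fieldType) (r : nat) (G : groupType) (d : nat)
  : ldata k r G :=
  @LData k r G d (fun _ => 1%:M) (fun _ => d) (fun _ => 1%:M) (fun _ => 1%:M).

(* Morphisms of sheaves F -> F' in terms of the data: a linear map on the
   stalks over the complement and on the stalks over each K_s, compatible
   with all the structure. *)
Definition is_mor (k : fieldType) (r : nat) (G : groupType) (F F' : ldata k r G)
    (phi : 'M[k]_(dV F', dV F)) (psi : forall s, 'M[k]_(dW F' s, dW F s)) :=
  [/\ forall g, phi *m rho F g = rho F' g *m phi,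
      forall s, phi *m T F s = T F' s *m psi s
    & forall s, psi s *m rhoK F s = rhoK F' s *m psi s].

Definition short_exact (k : fieldType) (n m p : nat)
    (a : 'M[k]_(m, n)) (b : 'M[k]_(p, m)) :=
  [/\ \rank a = n, \rank b = p, b *m a = 0 & (n + p)%N = m].

Definition ses (k : fieldType) (r : nat) (G : groupType) (A B C : ldata k r G)
    (a : 'M[k]_(dV B, dV A)) (aK : forall s, 'M[k]_(dW B s, dW A s))
    (b : 'M[k]_(dV C, dV B)) (bK : forall s, 'M[k]_(dW C s, dW B s)) :=
  [/\ is_mor a aK, is_mor b bK, short_exact a b
    & forall s, short_exact (aK s) (bK s)].

(* Local trivialization: f_s : V -> k surjective (i.e. nonzero, as a row
   vector) with f_s|_{W_s} = 0. *)
Definition loc_triv (k : fieldType) (r : nat) (G : groupType) (F : ldata k r G)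
    (f : 'I_r -> 'rV[k]_(dV F)) :=
  forall s, f s != 0 /\ f s *m T F s = 0.

Definition right_inv (k : fieldType) (n r : nat)
    (f : 'I_r -> 'rV[k]_n) (u : 'I_r -> 'cV[k]_n) :=
  forall s, f s *m u s = 1%:M.

(* Generators of the framed cord algebra Cord(L): framed cords c_st (a cord
   from the framing curve of K_s to that of K_t, represented by the element
   of pi_1(X \ L) giving its trivialized parallel transport), lambda_s, mu_s.
   (The inverses lambda_s^-1, mu_s^-1 are determined by these.) *)
Inductive cord_gen (r : nat) (G : Type) :=
| CordC of 'I_r & 'I_r & G
| Lambda of 'I_r
| Mu of 'I_r.

Definition eps (k : fieldType) (r : nat) (G : groupType) (mer lon : 'I_r -> G)
    (F : ldata k r G) (f : 'I_r -> 'rV[k]_(dV F)) (u : 'I_r -> 'cV[k]_(dV F))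
    (x : cord_gen r G) : k :=
  match x with
  | CordC s t c => (f s *m rho F c *m (1%:M - rho F (mer t)) *m u t) ord0 ord0
  | Lambda s => (f s *m rho F (lon s) *m u s) ord0 ord0
  | Mu s => 1 - (f s *m (1%:M - rho F (mer s)) *m u s) ord0 ord0
  end.

(* Main.v *)
Require Import Defs.
From HB Require Import structures.
From mathcomp Require Import all_boot all_order all_algebra.
From mathcomp Require Import zify.
Import GRing.Theory.
Local Open Scope ring_scope.
Set Implicit Arguments. Unset Strict Implicit.

Lemma kerP (k : fieldType) m n p q (A : 'M[k]_(m,n)) (B : 'M[k]_(n,p)) (w : 'M[k]_(n,q)) :
  A *m B = 0 -> (\rank A + \rank B)%N = n -> A *m w = 0 ->
  exists a : 'M[k]_(p,q), w = B *m a.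
Proof.
move=> AB rk Aw.
have sB : (B^T <= kermx A^T)%MS by apply/sub_kermxP; rewrite -trmx_mul AB trmx0.
have sw : (w^T <= kermx A^T)%MS by apply/sub_kermxP; rewrite -trmx_mul Aw trmx0.
have eq : (kermx A^T <= B^T)%MS.
  rewrite -(mxrank_leqif_sup sB) mxrank_ker !mxrank_tr.
  by apply/eqP; lia.
have /submxP [D HD] := submx_trans sw eq.
exists D^T; by rewrite -[w]trmxK HD trmx_mul trmxK.
Qed.

Lemma rinvP (k : fieldType) m n (A : 'M[k]_(m,n)) :
  \rank A = m -> exists X : 'M[k]_(n,m), A *m X = 1%:M.
Proof.
move=> rk.
have full : row_full A^T by rewrite /row_full mxrank_tr rk.
have := mulmxKpV (submx_full (1%:M : 'M[k]_m) full).
rewrite mul1mx => H.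
exists (pinvmx A^T)^T; by rewrite -[A]trmxK -trmx_mul trmxK H trmx1.
Qed.

Lemma fiber (k : fieldType) (r : nat) (G : groupType) (mer lon : 'I_r -> G)
  (F : ldata k r G) (f : 'I_r -> 'rV[k]_(dV F)) (u u' : 'cV[k]_(dV F)) s :
  is_Sh_s0 mer lon F -> loc_triv f -> f s *m u = 1%:M -> f s *m u' = 1%:M ->
  exists a, u = u' + T F s *m a.
Proof.
case=> _ rkT dimT _ _ /(_ s) [fn0 fT] fu fu'.
have h1 : (\rank (f s) + \rank (T F s))%N = dV F by rewrite rank_rV fn0 rkT addnC dimT.
have h2 : f s *m (u - u') = 0 by rewrite mulmxBr fu fu' subrr.
have [a Ha] := kerP fT h1 h2.
by exists a; rewrite -Ha addrC subrK.
Qed.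

Lemma eps_indep (k : fieldType) (r : nat) (G : groupType) (mer lon : 'I_r -> G)
  (F : ldata k r G) (f : 'I_r -> 'rV[k]_(dV F)) (u u' : 'I_r -> 'cV[k]_(dV F)) :
  is_Sh_s0 mer lon F -> loc_triv f -> right_inv f u -> right_inv f u' ->
  forall x : cord_gen r G, eps mer lon f u x = eps mer lon f u' x.
Proof.
move=> Sh lt ru ru' x.
have Hs s : exists a, u s = u' s + T F s *m a by apply: (fiber Sh lt (ru s) (ru' s)).
have Sh' := Sh; case: Sh' => _ _ _ Hmer Hlon.
case: x => [s t c|s|s] /=.
- have [a ->] := Hs t.
  set A := f s *m rho F c *m (1%:M - rho F (mer t)).
  have Z : A *m (T F t *m a) = 0.
    by rewrite /A mulmxA -(mulmxA _ (1%:M - _)) mulmxBl mul1mx Hmer subrr mulmx0 mul0mx.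
  by rewrite (mulmxDr A) Z addr0.
- have [a ->] := Hs s.
  set A := f s *m rho F (lon s).
  have [_ fT] := lt s.
  have Z : A *m (T F s *m a) = 0.
    by rewrite /A mulmxA -(mulmxA _ (rho F _)) Hlon mulmxA fT !mul0mx.
  by rewrite (mulmxDr A) Z addr0.
- have [a ->] := Hs s.
  set A := f s *m (1%:M - rho F (mer s)).
  have Z : A *m (T F s *m a) = 0.
    by rewrite /A mulmxA -(mulmxA _ (1%:M - _)) mulmxBl mul1mx Hmer subrr mulmx0 mul0mx.
  by rewrite (mulmxDr A) Z addr0.
Qed.

Unset Implicit Arguments. Set Strict Implicit.

Theorem proposition4p7 (k : fieldType) (r : nat) (G : groupType)
    (mer lon : 'I_r -> G) (F Ft : ldata k r G) (d : nat) :
  is_Sh_s0 mer lon F -> is_Sh_s0 mer lon Ft ->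
  (* case (1): 0 -> Ft -> F -> L_X -> 0, induced f~_s = f_s restricted *)
  (forall (i : 'M[k]_(dV F, dV Ft)) (iK : forall s, 'M[k]_(dW F s, dW Ft s))
          (q : 'M[k]_(dV (const_loc k r G d), dV F))
          (qK : forall s, 'M[k]_(dW (const_loc k r G d) s, dW F s))
          (f : 'I_r -> 'rV[k]_(dV F)),
      ses i iK q qK -> loc_triv f ->
      let ft := fun s => f s *m i in
      loc_triv ft /\
      forall u ut, right_inv f u -> right_inv ft ut ->
        forall x, eps mer lon f u x = eps mer lon ft ut x) /\
  (* case (2): 0 -> L_X -> F -> Ft -> 0, induced f~ on the quotient V/V_0 *)
  (forall (j : 'M[k]_(dV F, dV (const_loc k r G d)))
          (jK : forall s, 'M[k]_(dW F s, dW (const_loc k r G d) s))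
          (p : 'M[k]_(dV Ft, dV F)) (pK : forall s, 'M[k]_(dW Ft s, dW F s))
          (f : 'I_r -> 'rV[k]_(dV F)),
      ses j jK p pK -> loc_triv f ->
      exists ft : 'I_r -> 'rV[k]_(dV Ft),
        (forall s, ft s *m p = f s) /\
        loc_triv ft /\
        forall u ut, right_inv f u -> right_inv ft ut ->
          forall x, eps mer lon f u x = eps mer lon ft ut x).
Proof.
move=> ShF ShFt; split.
- move=> i iK q qK f [[mi1 mi2 mi3] [mq1 mq2 mq3] [rki rkq qi dimi] exK] lt ft.
  have ltt : loc_triv ft.
    move=> s; split; last by rewrite /ft -mulmxA mi2 mulmxA (proj2 (lt s)) mul0mx.
    apply/eqP => H.
    have [_ rkT dimT _ _] := ShF.
    have [_ rkTt dimTt _ _] := ShFt.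
    have h1 : (\rank (f s) + \rank (T F s))%N = dV F.
      by rewrite rank_rV (proj1 (lt s)) rkT addnC dimT.
    have [a Ha] := kerP (proj2 (lt s)) h1 H.
    have [rkiK rkqK qKiK dimK] := exK s.
    have qKa : qK s *m a = 0.
      have := mq2 s; rewrite /= mul1mx => E.
      by rewrite -E -mulmxA -Ha.
    have h2 : (\rank (qK s) + \rank (iK s))%N = dW F s by rewrite rkqK rkiK addnC.
    have [b Hb] := kerP qKiK h2 qKa.
    have : (\rank i <= \rank (iK s))%N.
      rewrite Ha Hb; apply: leq_trans (mxrankM_maxr _ _) _; exact: mxrankM_maxl.
    rewrite rki rkiK -(dimTt s). lia.
  split=> // u ut ru rut x.
  have ru' : right_inv f (fun s => i *m ut s) by move=> s; rewrite mulmxA; exact: rut.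
  rewrite (eps_indep ShF lt ru ru').
  have H2 g : i *m (1%:M - rho Ft g) = (1%:M - rho F g) *m i.
    by rewrite mulmxBr mulmxBl mulmx1 mul1mx mi1.
  case: x => [s t c|s|s] /=; rewrite /ft !mulmxA.
  + by rewrite -(mulmxA (f s) i (rho Ft c)) mi1 mulmxA -(mulmxA (f s *m rho F c) i) H2 mulmxA.
  + by rewrite -(mulmxA (f s) i) mi1 mulmxA.
  + by rewrite -(mulmxA (f s) i) H2 mulmxA.
- move=> j jK p pK f [[mj1 mj2 mj3] [mp1 mp2 mp3] [rkj rkp pj dimj] exK] lt.
  have [X pX] := rinvP rkp.
  have fXp s : f s *m X *m p = f s.
    have h : (\rank p + \rank j)%N = dV F by rewrite rkp rkj addnC.
    have h2 : p *m (1%:M - X *m p) = 0 by rewrite mulmxBr mulmx1 mulmxA pX mul1mx subrr.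
    have [a Ha] := kerP pj h h2.
    have jT : j = T F s *m jK s by have := mj2 s; rewrite /= mulmx1.
    have : f s *m (1%:M - X *m p) = 0 by rewrite Ha jT !mulmxA (proj2 (lt s)) !mul0mx.
    by rewrite mulmxBr mulmx1 mulmxA => /eqP; rewrite subr_eq0 => /eqP <-.
  exists (fun s => f s *m X); split; first exact: fXp.
  have ltt : loc_triv (fun s => f s *m X).
    move=> s; split.
      apply/eqP => H; have := proj1 (lt s); by rewrite -fXp H mul0mx eqxx.
    have [_ rkpK _ _] := exK s.
    have [Y pKY] := rinvP rkpK.
    rewrite -[LHS]mulmx1 -pKY mulmxA -(mulmxA _ (T Ft s)) -mp2 mulmxA fXp.
    by rewrite (proj2 (lt s)) mul0mx.
  split=> // u ut ru rut x.
  have ru' : right_inv (fun s => f s *m X) (fun s => p *m u s).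
    by move=> s; rewrite mulmxA fXp; exact: ru.
  rewrite (eps_indep ShFt ltt rut ru').
  have H2 g : p *m (1%:M - rho F g) = (1%:M - rho Ft g) *m p.
    by rewrite mulmxBr mulmxBl mulmx1 mul1mx mp1.
  case: x => [s t c|s|s] /=; rewrite !mulmxA.
  + by rewrite -(mulmxA (f s *m X *m rho Ft c) (1%:M - _) p) -H2 mulmxA -(mulmxA (f s *m X) (rho Ft c) p) -mp1 mulmxA fXp.
  + by rewrite -(mulmxA (f s *m X) (rho Ft _) p) -mp1 mulmxA fXp.
  + by rewrite -(mulmxA (f s *m X) (1%:M - _) p) -H2 mulmxA fXp.
Qed.
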